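(* Let $G$ be a connected graph on $[n+1]$ such that $NC_G$ is graded. Then the max-min edge labeling is an $S_n$ EL-labeling of $NC_G$ if and only if $G$ is perfectly labeled.
   Context: Graphs are finite simple graphs with vertex set $[n+1]$; edges are written $ij$ with $i<j$. $G$ is perfectly labeled if whenever $ik,jk\in E(G)$ with $i<j<k$, also $ij\in E(G)$. A bond of $G$ is a spanning subgraph (identified with its edge set) each of whose connected components is an induced subgraph of $G$; it is noncrossing if there are no two distinct components with vertex sets $B,B'$ and $a,c\in B$, $b,d\in B'$, $a<b<c<d$. $NC_G$ is the poset of noncrossing bonds ordered by inclusion of edge sets. When $G$ is connected and $NC_G$ is graded, each cover $H\lessdot H'$ merges exactly two components (blocks) $B,B'$ of $H$ into one; the max-min edge labeling assigns to it the label $\max\{\min B,\min B'\}-1$. An EL-labeling: every interval has a unique maximal chain with strictly increasing labels, and it lexicographically precedes every other maximal chain of the interval. An $S_n$ EL-labeling is an EL-labeling of a poset of rank $n$ in which the labels along every maximal chain form a permutation of $[n]$ (with the natural order on $[n]$). *)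

(* Defs.v *)
(* Vertices [n+1] = {1,...,n+1} are represented 0-indexed by 'I_n.+1
   (vertex k+1 of the paper is the ordinal k). *)
From mathcomp Require Import all_boot.
Set Implicit Arguments. Unset Strict Implicit. Unset Printing Implicit Defensive.

(* A graph G on 'I_n.+1 is a boolean relation (simple: symmetric, irreflexive).
   Subgraphs/bonds are identified with edge sets: sets of pairs (i,j) with i < j. *)
Notation edgeset n := {set 'I_n.+1 * 'I_n.+1}.

Definition Eset n (G : rel 'I_n.+1) : edgeset n :=
  [set p : 'I_n.+1 * 'I_n.+1 | (p.1 < p.2)%N && G p.1 p.2].

Definition hrel n (H : edgeset n) : rel 'I_n.+1 :=
  fun u v => ((u, v) \in H) || ((v, u) \in H).

Definition conn n (H : edgeset n) : rel 'I_n.+1 := connect (hrel H).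

Definition graph_connected n (G : rel 'I_n.+1) : Prop :=
  forall u v : 'I_n.+1, connect G u v.

(* H is a bond of G: a spanning subgraph of G each of whose components is an
   induced subgraph of G (every G-edge inside a component belongs to H). *)
Definition is_bond n (G : rel 'I_n.+1) (H : edgeset n) : bool :=
  (H \subset Eset G) &&
  [forall i : 'I_n.+1, forall j : 'I_n.+1,
     [&& (i < j)%N, G i j & conn H i j] ==> ((i, j) \in H)].

(* no two distinct components B, B' with a,c in B, b,d in B', a<b<c<d *)
Definition noncrossing n (H : edgeset n) : bool :=
  [forall a : 'I_n.+1, forall b : 'I_n.+1, forall c : 'I_n.+1, forall d : 'I_n.+1,
     [&& (a < b)%N, (b < c)%N, (c < d)%N, conn H a c & conn H b d] ==> conn H a b].

Definition ncbond n (G : rel 'I_n.+1) (H : edgeset n) : bool :=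
  is_bond G H && noncrossing H.

Definition nc_cover n (G : rel 'I_n.+1) (x y : edgeset n) : bool :=
  [&& ncbond G x, ncbond G y, x \proper y &
      [forall z : edgeset n, ~~ [&& ncbond G z, x \proper z & z \proper y]]].

(* s is (the sequence of elements after x of) a maximal chain of the interval [x,y]:
   x = H0 <. H1 <. ... <. Hk = y *)
Definition maxchain n (G : rel 'I_n.+1) (x y : edgeset n) (s : seq (edgeset n)) : bool :=
  path (nc_cover G) x s && (last x s == y).

Definition isbmin n (H : edgeset n) (v : 'I_n.+1) : bool :=
  [forall u : 'I_n.+1, (u < v)%N ==> ~~ conn H u v].

(* max-min edge labeling of a cover H <. H' merging blocks B, B' :
   max{min B, min B'} - 1 (1-indexed) = max{min B, min B'} (0-indexed), which is
   the unique vertex that is a block minimum in H but not in H'.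
   (Defined as the maximum of such vertices; when exactly two blocks merge there is
   exactly one.) *)
Definition mmlabel n (H H' : edgeset n) : nat :=
  \max_(v : 'I_n.+1 | isbmin H v && ~~ isbmin H' v) (v : nat).

Definition chain_labels n (x : edgeset n) (s : seq (edgeset n)) : seq nat :=
  pairmap (@mmlabel n) x s.

Fixpoint lexlt (s t : seq nat) : bool :=
  match s, t with
  | x :: s', y :: t' => (x < y)%N || ((x == y) && lexlt s' t')
  | _, _ => false
  end.

Definition nc_graded n (G : rel 'I_n.+1) : Prop :=
  forall s t, maxchain G set0 (Eset G) s -> maxchain G set0 (Eset G) t ->
  size s = size t.

Definition mm_EL_labeling n (G : rel 'I_n.+1) : Prop :=
  forall x y : edgeset n, ncbond G x -> ncbond G y -> x \subset y ->
  exists s, [/\ maxchain G x y s,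
               sorted ltn (chain_labels x s),
               (forall t, maxchain G x y t -> sorted ltn (chain_labels x t) -> t = s) &
               (forall t, maxchain G x y t -> t <> s ->
                  lexlt (chain_labels x s) (chain_labels x t))].

Definition mm_Sn_EL_labeling n (G : rel 'I_n.+1) : Prop :=
  [/\ mm_EL_labeling G,
      (forall s, maxchain G set0 (Eset G) s -> size s = n) &
      (forall s, maxchain G set0 (Eset G) s ->
         perm_eq (chain_labels set0 s) (iota 1 n))].

Definition perfectly_labeled n (G : rel 'I_n.+1) : Prop :=
  forall i j k : 'I_n.+1, (i < j)%N -> (j < k)%N -> G i k -> G j k -> G i j.

(* Main.v *)
Require Import Defs.
From mathcomp Require Import all_boot zify.
Set Implicit Arguments. Unset Strict Implicit. Unset Printing Implicit Defensive.

Section Basics.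
Variable n : nat.
Notation T := 'I_n.+1.
Implicit Types H x y z : edgeset n.
Implicit Types u v a b : T.

Lemma hrel_sym H : symmetric (hrel H).
Proof. by move=> u v; rewrite /hrel orbC. Qed.

Lemma conn_sym H u v : conn H u v = conn H v u.
Proof. exact: (sym_connect_sym (hrel_sym H)). Qed.

Lemma conn_trans H u v (w : T) : conn H u v -> conn H v w -> conn H u w.
Proof. exact: connect_trans. Qed.

Lemma conn_refl H u : conn H u u.
Proof. exact: connect0. Qed.

Lemma conn_edge H u v : (u, v) \in H -> conn H u v.
Proof. by move=> h; apply: connect1; rewrite /hrel h. Qed.

Lemma conn_mono H H' u v : H \subset H' -> conn H u v -> conn H' u v.
Proof.
move=> sub; apply: connect_sub => a b; rewrite /hrel => /orP[] h; apply: connect1;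
by rewrite /hrel (subsetP sub _ h) ?orbT.
Qed.

Lemma connect_f (T' : eqType) (f : T -> T') (e : rel T) :
  (forall a b, e a b -> f a = f b) -> forall a b, connect e a b -> f a = f b.
Proof.
move=> He a b /connectP [p pth ->]; elim: p a pth => //= c p IH a /andP[eac /IH <-].
exact: He.
Qed.

Lemma isbminP H v : reflect (forall u : T, (u < v)%N -> ~~ conn H u v) (isbmin H v).
Proof.
apply: (iffP forallP) => h u; first by move=> uv; have := h u; rewrite uv.
by apply/implyP; apply: h.
Qed.

Lemma isbmin_mono H H' v : H \subset H' -> isbmin H' v -> isbmin H v.
Proof.
move=> sub /isbminP h; apply/isbminP => u uv; apply/negP => c.
by have := h u uv; rewrite (conn_mono sub c).
Qed.

Lemma bmin_uniq H a a' : isbmin H a -> isbmin H a' -> conn H a a' -> a = a'.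
Proof.
move=> /isbminP ha /isbminP ha' c; apply: val_inj => /=.
case: (ltngtP a a') => // lt.
  by have := ha' a lt; rewrite c.
by have := ha a' lt; rewrite conn_sym c.
Qed.

Definition rho H (v : T) : T := [arg min_(u < v | conn H u v) val u].

Lemma rho_spec H v : conn H (rho H v) v /\ forall u, conn H u v -> (rho H v <= u)%N.
Proof.
rewrite /rho; case: arg_minnP; first exact: conn_refl.
by move=> r cr hr; split.
Qed.

Lemma rho_conn H v : conn H (rho H v) v.
Proof. by case: (rho_spec H v). Qed.

Lemma rho_le H v : (rho H v <= v)%N.
Proof. by case: (rho_spec H v) => _ h; apply: h; apply: conn_refl. Qed.

Lemma rho_bmin H v : isbmin H (rho H v).
Proof.
apply/isbminP => u lt; apply/negP => c.
case: (rho_spec H v) => c2 h.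
have := h u (conn_trans c c2); rewrite leqNgt lt //.
Qed.

Lemma rho_eqP H a b : (rho H a == rho H b) = conn H a b.
Proof.
apply/eqP/idP => [e|c].
  by apply: (conn_trans (v := rho H a)); [rewrite conn_sym; apply: rho_conn | rewrite e rho_conn].
apply: bmin_uniq; try exact: rho_bmin.
apply: (conn_trans (rho_conn _ _)); apply: (conn_trans c); rewrite conn_sym; exact: rho_conn.
Qed.

Lemma isbmin_rho H v : isbmin H v = (rho H v == v).
Proof.
apply/idP/eqP => [h|<-]; last exact: rho_bmin.
by apply: bmin_uniq (rho_bmin _ _) h (rho_conn _ _).
Qed.

Lemma rho_of_bmin H u v : isbmin H u -> conn H u v -> rho H v = u.
Proof.
move=> hu c; apply: bmin_uniq (rho_bmin _ _) hu _.
by rewrite conn_sym; apply: (conn_trans c); rewrite conn_sym; apply: rho_conn.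
Qed.

Lemma noncrossP H : reflect (forall a b c d : T, (a < b)%N -> (b < c)%N -> (c < d)%N ->
   conn H a c -> conn H b d -> conn H a b) (noncrossing H).
Proof.
apply: (iffP forallP) => h.
  move=> a b c d ab bc cd ac bd.
  by move: (h a) => /forallP /(_ b) /forallP /(_ c) /forallP /(_ d) /implyP; apply; apply/and5P.
move=> a; apply/forallP => b; apply/forallP => c; apply/forallP => d; apply/implyP.
by case/and5P; apply: h.
Qed.

End Basics.

Section Bonds.
Variable n : nat.
Notation T := 'I_n.+1.
Implicit Types H x y z w : edgeset n.
Implicit Types u v a b c i j : T.
Variable G : rel T.
Hypothesis Gsym : symmetric G.
Hypothesis Girr : irreflexive G.

Lemma bond_in H e : is_bond G H -> e \in H -> (e.1 < e.2)%N && G e.1 e.2.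
Proof. by case/andP => /subsetP s _ /s; rewrite inE. Qed.

Lemma bond_edge H i j : is_bond G H -> (i < j)%N -> G i j -> conn H i j -> (i, j) \in H.
Proof.
case/andP => _ /forallP /(_ i) /forallP /(_ j) /implyP h ij g c; apply: h.
by rewrite ij g c.
Qed.

Lemma bond_ext H1 H2 : is_bond G H1 -> is_bond G H2 ->
  (forall u v, conn H1 u v -> conn H2 u v) -> H1 \subset H2.
Proof.
move=> b1 b2 h; apply/subsetP => -[i j] hin.
have /andP[ij g] := bond_in b1 hin.
by apply: bond_edge => //; apply: h; apply: conn_edge.
Qed.

Lemma bond_eq H1 H2 : is_bond G H1 -> is_bond G H2 ->
  (forall u v, conn H1 u v = conn H2 u v) -> H1 = H2.
Proof.
move=> b1 b2 h; apply/eqP; rewrite eqEsubset.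
by rewrite !bond_ext // => u v; rewrite h.
Qed.

Lemma Lempty x w : x \subset w -> is_bond G x -> is_bond G w ->
  (forall v, isbmin x v -> isbmin w v) -> x = w.
Proof.
move=> sub bx bw h; apply/eqP; rewrite eqEsubset sub /=.
apply: bond_ext => // u v c.
rewrite -rho_eqP; apply/eqP; apply: bmin_uniq (h _ (rho_bmin _ _)) (h _ (rho_bmin _ _)) _.
apply: (conn_trans (conn_mono sub (rho_conn x u))); apply: (conn_trans c).
by rewrite conn_sym; apply: (conn_mono sub (rho_conn x v)).
Qed.

Lemma hrelG H a c : is_bond G H -> hrel H a c -> G a c.
Proof.
move=> bH; rewrite /hrel => /orP[] /(bond_in bH) /andP[_ //].
by rewrite Gsym.
Qed.

Lemma hrel_of_G H a c : is_bond G H -> G a c -> conn H a c -> hrel H a c.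
Proof.
move=> bH g cc; rewrite /hrel; case: (ltngtP a c) => lt.
- by rewrite bond_edge.
- by rewrite (@bond_edge H c a) ?orbT // 1?Gsym // conn_sym.
- have e : a = c by apply: val_inj.
  by move: g; rewrite e Girr.
Qed.

Definition kap x y b u : T := if rho x u == b then rho y b else rho x u.

Lemma rho_char x z y b : x \subset z -> z \subset y ->
  (forall v, (isbmin x v && ~~ isbmin z v) = (v == b)) ->
  (forall v, isbmin x v -> ~~ isbmin y v -> (b <= v)%N) ->
  forall u, rho z u = kap x y b u.
Proof.
move=> xz zy hLz hb u; rewrite /kap.
have rb : isbmin x (rho x u) := rho_bmin _ _.
case: eqP => [rE | rnb].
- have -> : rho z u = rho z b.
    apply/eqP; rewrite eq_sym rho_eqP; apply: (conn_mono xz); rewrite -rE; exact: rho_conn.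
  have tb : isbmin z (rho z b) := rho_bmin _ _.
  have tx := isbmin_mono xz tb.
  have cty : conn y (rho z b) b := conn_mono zy (rho_conn _ _).
  case ty: (isbmin y (rho z b)); first by rewrite (rho_of_bmin ty cty).
  have h1 := hb _ tx (negbT ty).
  have h2 := rho_le z b.
  have e : rho z b = b by apply: val_inj; apply/eqP; rewrite eqn_leq h1 h2.
  by have := hLz b; rewrite eqxx -e tx tb.
- apply: rho_of_bmin; last by apply: (conn_mono xz); exact: rho_conn.
  have := hLz (rho x u); rewrite rb /=.
  by case: (isbmin z _) => //=; move/esym/eqP.
Qed.

Lemma Uniq x z z' y b : is_bond G z -> is_bond G z' ->
  x \subset z -> z \subset y -> x \subset z' -> z' \subset y ->
  (forall v, (isbmin x v && ~~ isbmin z v) = (v == b)) ->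
  (forall v, (isbmin x v && ~~ isbmin z' v) = (v == b)) ->
  (forall v, isbmin x v -> ~~ isbmin y v -> (b <= v)%N) -> z = z'.
Proof.
move=> bz bz' xz zy xz' z'y h h' hb; apply: bond_eq => // u v.
by rewrite -!rho_eqP !(rho_char xz zy h hb) !(rho_char xz' z'y h' hb).
Qed.

End Bonds.

Lemma exists_max n (x0 : 'I_n) (s : seq 'I_n) :
  exists2 t, t \in x0 :: s & forall t', t' \in x0 :: s -> (t' <= t)%N.
Proof.
elim: s => [|a s [t tin tmax]].
  by exists x0 => [|t']; rewrite ?inE // => /eqP ->.
case: (leqP t a) => ta.
  exists a; first by rewrite !inE eqxx orbT.
  move=> t'; rewrite !inE => /orP[/eqP->|/orP[/eqP->//|h]].
    by apply: leq_trans ta; apply: tmax; rewrite inE eqxx.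
  by apply: leq_trans ta; apply: tmax; rewrite inE h orbT.
exists t; first by move: tin; rewrite !inE => /orP[->|->]; rewrite ?orbT.
move=> t'; rewrite !inE => /orP[/eqP->|/orP[/eqP->|h]].
- by apply: tmax; rewrite inE eqxx.
- exact: ltnW.
- by apply: tmax; rewrite inE h orbT.
Qed.

Lemma ord_lt n (a t : 'I_n) : a != t -> (a <= t)%N -> (a < t)%N.
Proof. by move=> ne le; rewrite ltn_neqAle le andbT. Qed.

Section PL.
Variable n : nat.
Notation T := 'I_n.+1.
Implicit Types H x y z w : edgeset n.
Implicit Types u v a b c i j t : T.
Variable G : rel T.
Hypothesis Gsym : symmetric G.
Hypothesis Girr : irreflexive G.
Hypothesis PL : perfectly_labeled G.

Lemma PL2 a c t : G a t -> G c t -> (a < t)%N -> (c < t)%N -> a != c -> G a c.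
Proof.
move=> gat gct lat lct ac; case: (ltngtP a c) => lt.
- exact: PL lt lct gat gct.
- by rewrite Gsym; exact: PL lt lat gct gat.
- by move: ac; rewrite (val_inj lt) eqxx.
Qed.

Lemma hrel_neq H a c : is_bond G H -> hrel H a c -> a != c.
Proof. by move=> bH /(hrelG Gsym bH); apply: contraTneq => ->; rewrite Girr. Qed.

Lemma low_nb y u v : is_bond G y -> (u < v)%N -> conn y u v ->
  exists2 w : T, (w < v)%N & hrel y w v.
Proof.
move=> hby uv /connectP [p pth lE].
suff: forall k p, (size p < k)%N -> path (hrel y) u p -> v = last u p ->
   exists2 w : T, (w < v)%N & hrel y w v by move/(_ (size p).+1 p (ltnSn _) pth lE).
elim=> [//|k IH] {}p sz {}pth {}lE.
have [t tin tmax] := exists_max u p.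
have vt : (v <= t)%N by apply: tmax; rewrite lE mem_last.
have tp : t \in p.
  move: tin; rewrite inE => /orP[/eqP tu|//].
  by move: uv; rewrite -tu ltnNge vt.
case/splitPr: tp sz pth lE tmax => p1 p2.
rewrite cat_path /= => sz /and3P[pth1 hat pth2].
case: p2 sz pth2 => [|c p3] sz pth2.
  rewrite last_cat /= => -> tmax.
  exists (last u p1) => //.
  apply: ord_lt; first exact: (hrel_neq _ hat).
  by apply: tmax; rewrite -cat_cons mem_cat mem_last.
move: pth2 => /= /andP[htc pth3].
rewrite last_cat /= => lE tmax.
have lat : (last u p1 < t)%N.
  apply: ord_lt; first exact: (hrel_neq _ hat).
  by apply: tmax; rewrite -cat_cons mem_cat mem_last.
have ct : (c < t)%N.
  apply: ord_lt; first by rewrite eq_sym; exact: (hrel_neq _ htc).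
  by apply: tmax; rewrite -cat_cons mem_cat !inE eqxx !orbT.
case: (eqVneq (last u p1) c) => [e|ne].
  apply: (IH (p1 ++ p3)).
  - by move: sz; rewrite !size_cat /=; lia.
  - by rewrite cat_path pth1 e.
  - by rewrite last_cat e.
apply: (IH (p1 ++ c :: p3)).
- by move: sz; rewrite !size_cat /=; lia.
- rewrite cat_path pth1 /= pth3 andbT.
  apply: hrel_of_G => //.
    apply: (PL2 _ _ lat ct ne); first exact: hrelG hat.
    by rewrite Gsym; exact: hrelG htc.
  have c1 : conn y (last u p1) t by apply: connect1.
  have c2 : conn y t c by apply: connect1.
  exact: conn_trans c1 c2.
- by rewrite last_cat.
Qed.

End PL.

Section Exist.
Variable n : nat.
Notation T := 'I_n.+1.
Implicit Types H x y z w : edgeset n.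
Implicit Types u v a b c i j t : T.
Variable G : rel T.
Hypothesis Gsym : symmetric G.
Hypothesis Girr : irreflexive G.
Hypothesis PL : perfectly_labeled G.

Lemma exist_z0 x y b : ncbond G x -> ncbond G y -> x \subset y ->
  isbmin x b -> ~~ isbmin y b ->
  (forall v, isbmin x v -> ~~ isbmin y v -> (b <= v)%N) ->
  exists z0, [/\ ncbond G z0, x \subset z0, z0 \subset y &
                forall v, (isbmin x v && ~~ isbmin z0 v) = (v == b)].
Proof.
case/andP=> bx ncx; case/andP=> hby ncy xy xb yb hb.
set m := rho y b.
set K := kap x y b.
have ym : isbmin y m := rho_bmin _ _.
have xm : isbmin x m := isbmin_mono xy ym.
have mb : (m < b)%N.
  apply: ord_lt; last exact: rho_le.
  by apply: contraNneq yb => <-.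
have rxb : rho x b = b by apply/eqP; rewrite -isbmin_rho.
have rxm : rho x m = m by apply/eqP; rewrite -isbmin_rho.
have Kb : K b = m by rewrite /K /kap rxb eqxx.
have Kle : forall u, (K u <= rho x u)%N.
  by move=> u; rewrite /K /kap; case: eqP => [->|//]; exact: ltnW.
have yrx : forall t, conn y t b -> rho x t != m -> (b <= rho x t)%N.
  move=> t ctb ne; apply: hb; first exact: rho_bmin.
  apply: contra ne => yr; apply/eqP; apply: esym; apply: rho_of_bmin yr _.
  apply: conn_trans ctb; exact: conn_mono xy (rho_conn _ _).
have cymb : conn y m b := rho_conn _ _.
have [w wb hwb] := low_nb Gsym Girr PL hby mb cymb.
have rxw : rho x w = m.
  apply/eqP; apply: contraT => ne.
  have := yrx w (connect1 hwb) ne.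
  by rewrite leqNgt (leq_ltn_trans (rho_le _ _) wb).
have mnb : (m == b) = false := ltn_eqF mb.
have Kw : K w = m by rewrite /K /kap rxw mnb.
have xsub : x \subset Eset G by case/andP: bx.
have ysub : y \subset Eset G by case/andP: hby.
set z0 : edgeset n := [set e in Eset G | K e.1 == K e.2].
have inz0 : forall e, e \in Eset G -> K e.1 = K e.2 -> e \in z0.
  by move=> e he ke; rewrite inE he ke eqxx.
have hz0 : forall u v, hrel z0 u v -> K u = K v.
  move=> u v; rewrite /hrel !inE /= => /orP[] /andP[_ /eqP] //.
have Krho : forall u v, rho x u = rho x v -> K u = K v.
  by move=> u v e; rewrite /K /kap e.
have xz0 : x \subset z0.
  apply/subsetP => e he; apply: inz0; first exact: (subsetP xsub).
  by apply: Krho; apply/eqP; rewrite rho_eqP; apply: conn_edge; case: e he.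
have hz0wb : hrel z0 w b.
  move: hwb; rewrite /hrel => /orP[] h.
    by rewrite inz0 ?(subsetP ysub) //= Kw Kb.
  by rewrite (inz0 (b, w)) ?orbT ?(subsetP ysub) //= Kw Kb.
have cz0mb : conn z0 m b.
  apply: (@conn_trans _ _ _ w); last exact: connect1.
  by apply: (conn_mono xz0); rewrite -rxw; exact: rho_conn.
have cuK : forall u, conn z0 u (K u).
  move=> u; apply: (@conn_trans _ _ _ (rho x u)).
    by rewrite conn_sym; apply: (conn_mono xz0); exact: rho_conn.
  rewrite /K /kap; case: eqP => [->|_]; last exact: conn_refl.
  by rewrite conn_sym.
have connz0 : forall u v, conn z0 u v = (K u == K v).
  move=> u v; apply/idP/eqP => [c|e].
    exact: (connect_f hz0 c).
  apply: (conn_trans (cuK u)); rewrite e conn_sym; exact: cuK.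
have cyK : forall u, conn y u (K u).
  move=> u; apply: (@conn_trans _ _ _ (rho x u)).
    by rewrite conn_sym; apply: (conn_mono xy); exact: rho_conn.
  rewrite /K /kap; case: eqP => [->|_]; last exact: conn_refl.
  by rewrite conn_sym.
have z0y : z0 \subset y.
  apply/subsetP => -[i j]; rewrite !inE /= => /andP[/andP[ij g] /eqP e].
  apply: (bond_edge hby ij g).
  apply: (conn_trans (cyK i)); rewrite e conn_sym; exact: cyK.
have cz0y : forall u v, conn z0 u v -> conn y u v by move=> u v; apply: conn_mono.
exists z0; split => //; last first.
  move=> v; case: (eqVneq v b) => [->|nvb].
    rewrite xb /=; apply/isbminP => h.
    by have := h m mb; rewrite cz0mb.
  case xv: (isbmin x v) => //=; apply/negbTE; rewrite negbK.
  apply/isbminP => u uv; rewrite connz0.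
  have Kv : K v = v.
    by rewrite /K /kap; move: xv; rewrite isbmin_rho => /eqP ->; rewrite (negbTE nvb).
  rewrite Kv; apply/negP => /eqP e.
  have := leq_trans (Kle u) (rho_le x u).
  by rewrite e leqNgt uv.
apply/andP; split.
  apply/andP; split; first by apply/subsetP => e; rewrite inE => /andP[].
  apply/forallP => i; apply/forallP => j; apply/implyP => /and3P[ij g c].
  by rewrite inz0 ?inE ?ij ?g //; apply/eqP; rewrite -connz0.
move/noncrossP: ncx => nx; move/noncrossP: ncy => ny.
have cyKK : forall u v, K u = K v -> conn y u v.
  by move=> u v e; apply: (conn_trans (cyK u)); rewrite e conn_sym; exact: cyK.
apply/noncrossP => a1 a2 a3 a4 l12 l23 l34; rewrite !connz0 => /eqP K13 /eqP K24.
apply/eqP.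
have xstep : rho x a1 = rho x a3 -> rho x a2 = rho x a4 -> K a1 = K a2.
  move=> e13 e24; apply: Krho; apply/eqP; rewrite rho_eqP.
  by apply: (nx _ _ a3 a4) => //; rewrite -rho_eqP; apply/eqP.
have cy13 := cyKK _ _ K13.
have cy24 := cyKK _ _ K24.
have cy12 : conn y a1 a2 by apply: (ny _ _ a3 a4).
have rle := rho_le x.
case: (boolP (conn y a1 b)) => y1b; last first.
  have KR : forall t, conn y a1 t -> K t = rho x t.
    move=> t c1t; rewrite /K /kap; case: eqP => // e.
    move: y1b; rewrite (conn_trans c1t) //; rewrite conn_sym -e.
    by apply: (conn_mono xy); exact: rho_conn.
  have c11 := conn_refl y a1.
  have c14 := conn_trans cy12 cy24.
  by apply: xstep; rewrite -?(KR a1) -?(KR a2) -?(KR a3) -?(KR a4).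
have inY : forall t, conn y t b -> K t != m -> K t = rho x t /\ (b < rho x t)%N.
  move=> t ctb; rewrite /K /kap; case: (eqVneq (rho x t) b) => [->|rnb]; first by rewrite !eqxx.
  move=> rnm; split=> //; apply: ord_lt; last exact: yrx.
  by rewrite eq_sym.
have Km : forall t, K t = m -> rho x t = m \/ rho x t = b.
  by move=> t; rewrite /K /kap; case: eqP => [->|_ ->]; [right|left].
have y2b : conn y a2 b by apply: conn_trans y1b; rewrite conn_sym.
have y3b : conn y a3 b by apply: conn_trans y1b; rewrite conn_sym.
have y4b : conn y a4 b by apply: conn_trans y2b; rewrite conn_sym.
have cxr : forall t r, rho x t = r -> conn x r t by move=> t r <-; exact: rho_conn.
case: (eqVneq (K a1) m) => K1.
  case: (eqVneq (K a2) m) => K2; first by rewrite K1 K2.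
  have [K2e r2] := inY a2 y2b K2.
  have K4 : K a4 != m by rewrite -K24.
  have [K4e _] := inY a4 y4b K4.
  have e24 : rho x a2 = rho x a4 by rewrite -K2e -K4e K24.
  have K3 : K a3 = m by rewrite -K13.
  case: (eqVneq (rho x a1) (rho x a3)) => e13; first exact: xstep.
  case: (Km _ K1) => r1; case: (Km _ K3) => r3; try by move: e13; rewrite r1 r3 eqxx.
    have c : conn x b a2.
      apply: (nx _ _ a3 a4) => //; first exact: (leq_trans r2 (rle a2)).
        exact: cxr.
      by rewrite -rho_eqP e24.
    by move: r2; rewrite (rho_of_bmin xb c) ltnn.
  have c : conn x m a2.
    apply: (nx _ _ a3 a4) => //; first exact: (ltn_trans mb (leq_trans r2 (rle a2))).
      exact: cxr.
    by rewrite -rho_eqP e24.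
  by move: r2; rewrite (rho_of_bmin xm c) ltnNge ltnW.
have [K1e r1] := inY a1 y1b K1.
have K3 : K a3 != m by rewrite -K13.
have [K3e _] := inY a3 y3b K3.
have e13 : rho x a1 = rho x a3 by rewrite -K1e -K3e K13.
case: (eqVneq (K a2) m) => K2; last first.
  have [K2e _] := inY a2 y2b K2.
  have K4 : K a4 != m by rewrite -K24.
  have [K4e _] := inY a4 y4b K4.
  by apply: xstep => //; rewrite -K2e -K4e K24.
have K4 : K a4 = m by rewrite -K24.
case: (eqVneq (rho x a2) (rho x a4)) => e24; first exact: xstep.
case: (Km _ K2) => r2; case: (Km _ K4) => r4; try by move: e24; rewrite r2 r4 eqxx.
  have c : conn x m a1.
    apply: (nx _ _ a2 a3) => //; first exact: (ltn_trans mb (leq_trans r1 (rle a1))).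
      exact: cxr.
    by rewrite -rho_eqP e13.
  by move: r1; rewrite (rho_of_bmin xm c) ltnNge ltnW.
have c : conn x b a1.
  apply: (nx _ _ a2 a3) => //; first exact: (leq_trans r1 (rle a1)).
    exact: cxr.
  by rewrite -rho_eqP e13.
by move: r1; rewrite (rho_of_bmin xb c) ltnn.
Qed.
End Exist.

Section Chains.
Variable n : nat.
Notation T := 'I_n.+1.
Implicit Types H x y z w : edgeset n.
Implicit Types u v a b c i j t : T.
Variable G : rel T.

Lemma bond_of H : ncbond G H -> is_bond G H.
Proof. by case/andP. Qed.

Lemma path_sub x s : path (nc_cover G) x s -> x \subset last x s.
Proof.
elim: s x => [|z s IH] x /=; first by move=> _; exact: subxx.
case/andP => /and4P[_ _ pr _] /IH; exact: subset_trans (proper_sub pr).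
Qed.

Lemma path_proper x z s : path (nc_cover G) x (z :: s) -> x \proper last z s.
Proof.
case/andP => /and4P[_ _ pr _] /path_sub; exact: proper_sub_trans.
Qed.

Lemma maxchain_nil x s : maxchain G x x s -> s = [::].
Proof.
case: s => [//|z s] /andP[/path_proper pr /eqP /= e].
by move: pr; rewrite e properxx.
Qed.

Lemma mmlabel_eq x z d : (forall v, (isbmin x v && ~~ isbmin z v) = (v == d)) ->
  mmlabel x z = d.
Proof. by move=> h; rewrite /mmlabel (big_pred1 d). Qed.

End Chains.

Section Cover.
Variable n : nat.
Notation T := 'I_n.+1.
Implicit Types H x y z w : edgeset n.
Implicit Types u v a b c i j t : T.
Variable G : rel T.
Hypothesis Gsym : symmetric G.
Hypothesis Girr : irreflexive G.
Hypothesis PL : perfectly_labeled G.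

Lemma bstar x y : x \subset y -> x != y -> is_bond G x -> is_bond G y ->
  exists b, [/\ isbmin x b, ~~ isbmin y b &
     forall v, isbmin x v -> ~~ isbmin y v -> (b <= v)%N].
Proof.
move=> xy ne bx hby.
case: (boolP [exists v, isbmin x v && ~~ isbmin y v]) => [/existsP [v0 Pv0]|].
  case: (@arg_minnP _ v0 (fun v => isbmin x v && ~~ isbmin y v) (fun v : T => val v) Pv0) => b /andP[xb yb] hb.
  by exists b; split => // v xv yv; apply: hb; rewrite xv yv.
rewrite negb_exists => /forallP h.
have e : x = y by apply: (Lempty xy bx hby) => v xv; have := h v; rewrite xv /= negbK.
by rewrite e eqxx in ne.
Qed.

Lemma L_neq x z b : (forall v, (isbmin x v && ~~ isbmin z v) = (v == b)) -> x != z.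
Proof. by move=> h; apply/eqP => e; have := h b; rewrite e eqxx andbN. Qed.

Lemma cover_z0 x z0 b : ncbond G x -> ncbond G z0 -> x \subset z0 ->
  (forall v, (isbmin x v && ~~ isbmin z0 v) = (v == b)) -> nc_cover G x z0.
Proof.
move=> nx nz xz h; rewrite /nc_cover nx nz properEneq (L_neq h) xz /=.
apply/forallP => w; apply/negP => /and3P[nw xw wz].
have xw' := proper_sub xw; have wz' := proper_sub wz.
have sub : forall v, isbmin x v && ~~ isbmin w v -> v = b.
  move=> v /andP[xv wv]; apply/eqP; rewrite -h xv /=.
  by apply: contra wv; exact: isbmin_mono.
have [v0 Pv0] : exists v, isbmin x v && ~~ isbmin w v.
  apply/existsP; apply: contraT; rewrite negb_exists => /forallP hh.
  move: xw; rewrite properEneq => /andP[/eqP ne _]; apply/negP => _; apply: ne.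
  apply: (Lempty xw' (bond_of nx) (bond_of nw)).
  by move=> v xv; have := hh v; rewrite xv /= negbK.
have hw : forall v, (isbmin x v && ~~ isbmin w v) = (v == b).
  move=> v; apply/idP/eqP => [/sub //|->].
  by rewrite -(sub _ Pv0).
have hb : forall v, isbmin x v -> ~~ isbmin z0 v -> (b <= v)%N.
  by move=> v xv zv; have := h v; rewrite xv zv => /esym/eqP ->.
have e := Uniq (bond_of nw) (bond_of nz) xw' wz' xz (subxx _) hw h hb.
by move: wz; rewrite e properxx.
Qed.

Lemma cover_label x z : nc_cover G x z ->
  exists d, forall v, (isbmin x v && ~~ isbmin z v) = (v == d).
Proof.
case/and4P => nx nz pr hf.
have xz := proper_sub pr.
have ne : x != z by move: pr; rewrite properEneq => /andP[].
have [b [xb zb hb]] := bstar xz ne (bond_of nx) (bond_of nz).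
have [z0 [nz0 xz0 z0z hL]] := exist_z0 Gsym Girr PL nx nz xz xb zb hb.
exists b; suff <- : z0 = z by [].
apply/eqP; move/forallP: hf => /(_ z0); rewrite nz0 properEneq (L_neq hL) xz0 /=.
by rewrite properEneq z0z andbT negbK.
Qed.

End Cover.

Lemma card_dec (a b c k : nat) : (a < b)%N -> (b <= c)%N -> (c - a < k.+1)%N -> (c - b < k)%N.
Proof. lia. Qed.

Section Main.
Variable n : nat.
Notation T := 'I_n.+1.
Implicit Types H x y z w : edgeset n.
Implicit Types u v a b c i j : T.
Variable G : rel T.
Hypothesis Gsym : symmetric G.
Hypothesis Girr : irreflexive G.
Hypothesis PL : perfectly_labeled G.

Lemma EL_main k : forall x y, (#|y| - #|x| < k)%N -> ncbond G x -> ncbond G y -> x \subset y ->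
  exists s, [/\ maxchain G x y s, sorted ltn (chain_labels x s),
    (forall t, maxchain G x y t -> sorted ltn (chain_labels x t) -> t = s),
    (forall t, maxchain G x y t -> t <> s -> lexlt (chain_labels x s) (chain_labels x t)) &
    (forall z s', s = z :: s' -> forall v, isbmin x v -> ~~ isbmin y v -> (mmlabel x z <= v)%N)].
Proof.
elim: k => [//|k IH] x y hk nx ny xy.
case: (eqVneq x y) => [<-|xney].
  exists [::]; split => //; first by rewrite /maxchain /= eqxx.
    by move=> t /maxchain_nil.
  by move=> t /maxchain_nil.
have [b [xb yb hb]] := bstar xy xney (bond_of nx) (bond_of ny).
have [z0 [nz0 xz0 z0y hL]] := exist_z0 Gsym Girr PL nx ny xy xb yb hb.
have cz0 := cover_z0 nx nz0 xz0 hL.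
have lab0 : mmlabel x z0 = b := mmlabel_eq hL.
have pz0 : x \proper z0 by case/and4P: cz0.
have hk0 : (#|y| - #|z0| < k)%N.
  exact: card_dec (proper_card pz0) (subset_leq_card z0y) hk.
have [s' [mc' so' un' lx' hd']] := IH z0 y hk0 nz0 ny z0y.
have Lz0y : forall v, isbmin z0 v -> ~~ isbmin y v -> (b < v)%N.
  move=> v zv yv; have xv := isbmin_mono xz0 zv.
  have := hb v xv yv; rewrite leq_eqVlt => /orP[/eqP/val_inj e|//].
  have := hL b; rewrite xb eqxx /= e zv //.
have other : forall z d, nc_cover G x z -> z \subset y -> z != z0 ->
    (forall v, (isbmin x v && ~~ isbmin z v) = (v == d)) -> (b < d)%N /\ isbmin z b.
  move=> z d cz zy nzz0 hd.
  have nz : ncbond G z by case/and4P: cz.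
  have xz : x \subset z by case/and4P: cz => _ _ /proper_sub.
  have zb : isbmin z b.
    case: (eqVneq b d) => [e|nbd].
      case/negP: nzz0; apply/eqP.
      apply: (Uniq (bond_of nz) (bond_of nz0) xz zy xz0 z0y) hb => //.
      by move=> v; rewrite hd e.
    by have := hd b; rewrite xb (negbTE nbd) /= => /negbFE.
  split=> //.
  have := hd d; rewrite eqxx => /andP[xd zd].
  have yd : ~~ isbmin y d by apply: contra zd; exact: isbmin_mono.
  have := hb d xd yd; rewrite leq_eqVlt => /orP[/eqP/val_inj e|//].
  by move: zd; rewrite -e zb.
exists (z0 :: s'); split.
- by move: mc' => /andP[p' l']; rewrite /maxchain /= cz0 p' l'.
- rewrite /chain_labels /= lab0.
  move: mc' so' => /andP[]; case: s' {un' lx' hd'} => [//|z1 s''] /= /andP[c01 p1] l1 so'.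
  rewrite so' andbT.
  have [d1 h1] := cover_label Gsym Girr PL c01.
  rewrite (mmlabel_eq h1).
  have := h1 d1; rewrite eqxx => /andP[zd1 z1d1].
  apply: Lz0y zd1 _; apply: contra z1d1; apply: isbmin_mono.
  by move: (path_sub p1); rewrite (eqP l1).
- move=> t mt st; case: t mt st => [|z t'] mt st.
    by case/andP: mt => _ /eqP e; move: xney; rewrite -e eqxx.
  have [cz pt'] : nc_cover G x z /\ path (nc_cover G) z t' by case/andP: mt => /andP.
  have lt : last z t' = y by case/andP: mt => _ /eqP.
  have zy : z \subset y by rewrite -lt; exact: path_sub pt'.
  have [d hd] := cover_label Gsym Girr PL cz.
  move: st; rewrite /chain_labels /= (mmlabel_eq hd) => st.
  have st' := path_sorted st.
  have mt' : maxchain G z y t' by rewrite /maxchain pt' lt eqxx.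
  case: (eqVneq z z0) => [ez|nzz0].
    by rewrite ez in mt' st' *; rewrite (un' _ mt' st').
  exfalso.
  have [bd zb] := other z d cz zy nzz0 hd.
  have nz : ncbond G z by case/and4P: cz.
  have pz : x \proper z by case/and4P: cz.
  have hkz : (#|y| - #|z| < k)%N.
    exact: card_dec (proper_card pz) (subset_leq_card zy) hk.
  have [sz [mcz soz unz lxz hdz]] := IH z y hkz nz ny zy.
  have et := unz t' mt' st'.
  clear mt; case: t' et mt' st' st pt' lt => [|z1 t''] et mt' st' st pt' lt.
    have := hd b; rewrite /= in lt; rewrite lt xb yb /= => /esym/eqP e.
    by move: bd; rewrite e ltnn.
  have := hdz z1 t'' (esym et) b zb yb.
  move: st => /= /andP[lt1 _] le1.
  by have := ltn_trans (leq_ltn_trans le1 bd) lt1; rewrite ltnn.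
- move=> t mt nts; case: t mt nts => [|z t'] mt nts.
    by case/andP: mt => _ /eqP e; move: xney; rewrite -e eqxx.
  have [cz pt'] : nc_cover G x z /\ path (nc_cover G) z t' by case/andP: mt => /andP.
  have lt : last z t' = y by case/andP: mt => _ /eqP.
  have zy : z \subset y by rewrite -lt; exact: path_sub pt'.
  have [d hd] := cover_label Gsym Girr PL cz.
  have mt' : maxchain G z y t' by rewrite /maxchain pt' lt eqxx.
  rewrite /chain_labels /= lab0 (mmlabel_eq hd).
  case: (eqVneq z z0) => [ez|nzz0].
    have ed : d = b by apply: val_inj; rewrite /= -(mmlabel_eq hd) ez lab0.
    rewrite ed ltnn eqxx /=; subst z.
    by apply: lx' => // e; apply: nts; rewrite e.
  by have [-> _] := other z d cz zy nzz0 hd.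
- by move=> z s'' [<- _] v xv yv; rewrite lab0; exact: hb.
Qed.

End Main.

Section Sn.
Variable n : nat.
Notation T := 'I_n.+1.
Implicit Types H x y z w : edgeset n.
Implicit Types u v a b c i j : T.
Variable G : rel T.
Hypothesis Gsym : symmetric G.
Hypothesis Girr : irreflexive G.
Hypothesis PL : perfectly_labeled G.

Lemma labels_mem x s : path (nc_cover G) x s ->
  uniq (chain_labels x s) /\ forall i : nat, (i \in chain_labels x s) =
     [exists v : T, [&& (val v == i), isbmin x v & ~~ isbmin (last x s) v]].
Proof.
elim: s x => [|z s IH] x /=.
  split=> // i; apply/esym/existsP => -[v /and3P[_ -> //]].
case/andP => cz pth.
have [U M] := IH z pth.
have [d hd] := cover_label Gsym Girr PL cz.
have xz : x \subset z by case/and4P: cz => _ _ /proper_sub.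
have zw := path_sub pth.
rewrite /chain_labels /= (mmlabel_eq hd).
have [xd zd] : isbmin x d /\ ~~ isbmin z d by have := hd d; rewrite eqxx => /andP.
split.
  rewrite /= U andbT; rewrite /chain_labels in M; rewrite M.
  apply/existsP => -[v /and3P[/eqP vd zv _]].
  by move: zd; rewrite -(val_inj vd) zv.
move=> i; rewrite inE; rewrite /chain_labels in M; rewrite M.
apply/orP/existsP.
  case=> [/eqP ->|/existsP [v /and3P[vi zv wv]]].
    exists d; rewrite eqxx xd /=; apply: contra zd; exact: isbmin_mono.
  by exists v; apply/and3P; split => //; exact: isbmin_mono xz zv.
case=> v /and3P[/eqP vi xv wv].
case zv: (isbmin z v).
  by right; apply/existsP; exists v; apply/and3P; split => //; apply/eqP.
by left; have := hd v; rewrite xv zv /= => /esym/eqP e; rewrite -vi e.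
Qed.

Lemma Sn_labels : graph_connected G -> forall s, maxchain G set0 (Eset G) s ->
  perm_eq (chain_labels set0 s) (iota 1 n) /\ size s = n.
Proof.
move=> gc s /andP[pth /eqP l].
have [U M] := labels_mem pth.
rewrite l in M.
have bm0 : forall v, isbmin set0 v.
  move=> v; apply/isbminP => u uv; apply/negP => c.
  have e : u = v by apply: (connect_f (f := id)) c => a b; rewrite /hrel !inE.
  by move: uv; rewrite e ltnn.
have hE : hrel (Eset G) =2 G.
  move=> a b; rewrite /hrel !inE /=.
  case: (ltngtP a b) => lt /=; rewrite ?andbF ?orbF ?andbT //.
  have e : a = b by apply: val_inj.
  by rewrite e Girr.
have conE : forall u v, conn (Eset G) u v.
  by move=> u v; rewrite /conn (eq_connect hE).
have topm : forall v : T, isbmin (Eset G) v = (val v == 0).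
  move=> v; apply/isbminP/eqP => [h|v0 u].
    apply/eqP; apply: contraT; rewrite -lt0n => v0.
    by have := h ord0 v0; rewrite conE.
  by rewrite v0.
have P : perm_eq (chain_labels set0 s) (iota 1 n).
  apply: uniq_perm U (iota_uniq _ _) _ => i.
  rewrite M mem_iota; apply/existsP/idP => [[v /and3P[/eqP <- _]]|/andP[i1 i2]].
    by rewrite topm -lt0n add1n ltn_ord => ->.
  have ilt : (i < n.+1)%N by rewrite -add1n.
  by exists (Ordinal ilt); rewrite eqxx bm0 topm /= -lt0n i1.
split=> //.
by rewrite -(size_pairmap (@mmlabel n) set0) (perm_size P) size_iota.
Qed.

End Sn.

Lemma sub_pair (T' : finType) (e1 e2 : T') (z : {set T'}) : z \subset [set e1; e2] ->
  [\/ z = set0, z = [set e1], z = [set e2] | z = [set e1; e2]].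
Proof.
move=> /subsetP sz.
have hz : forall e, (e \in z) = ((e == e1) && (e1 \in z)) || ((e == e2) && (e2 \in z)).
  move=> e; apply/idP/idP.
    move=> ez; have := sz e ez; rewrite !inE => /orP[] /eqP ee; rewrite -ee ez eqxx //.
    by rewrite orbT.
  by case/orP => /andP[/eqP ->].
case h1: (e1 \in z); case h2: (e2 \in z).
- by constructor 4; apply/setP => e; rewrite hz h1 h2 !inE !andbT.
- by constructor 2; apply/setP => e; rewrite hz h1 h2 !inE !andbT andbF orbF.
- by constructor 3; apply/setP => e; rewrite hz h1 h2 !inE !andbT andbF.
- by constructor 1; apply/setP => e; rewrite hz h1 h2 !inE !andbF.
Qed.

Section Nec.
Variable n : nat.
Notation T := 'I_n.+1.
Implicit Types H x y z w : edgeset n.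
Implicit Types u v a b c i j : T.
Variable G : rel T.
Hypothesis Gsym : symmetric G.
Hypothesis Girr : irreflexive G.

Lemma conn_block H (S : pred T) c : c \in S ->
  (forall e, e \in H -> (e.1 \in S) && (e.2 \in S)) ->
  (forall u, u \in S -> conn H u c) ->
  forall u v, conn H u v = (u == v) || ((u \in S) && (v \in S)).
Proof.
move=> cS hH hc u v; apply/idP/idP => [cuv|].
  have hf : forall a b, hrel H a b -> (if a \in S then c else a) = (if b \in S then c else b).
    move=> a b; rewrite /hrel => /orP[] /hH /andP[aS bS]; by rewrite aS bS.
  have := connect_f hf cuv.
  case uS: (u \in S); case vS: (v \in S) => //= e; last by rewrite e eqxx.
  all: try first [by rewrite orbT | (rewrite -e cS in vS; discriminate) | (rewrite e cS in vS; discriminate) | (rewrite e cS in uS; discriminate) | (rewrite -e cS in uS; discriminate)].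
case/orP => [/eqP ->|/andP[uS vS]]; first exact: conn_refl.
by apply: conn_trans (hc u uS) _; rewrite conn_sym; exact: hc.
Qed.

Lemma block_isbmin H (S : pred T) :
  (forall u v, conn H u v = (u == v) || ((u \in S) && (v \in S))) ->
  forall v, isbmin H v = ~~ ((v \in S) && [exists u : T, (u < v)%N && (u \in S)]).
Proof.
move=> hc v; apply/isbminP/idP => [h|].
  apply/negP => /andP[vS /existsP[u /andP[uv uS]]].
  by have := h u uv; rewrite hc uS vS orbT.
move=> h u uv; rewrite hc; apply/negP => /orP[/eqP e|/andP[uS vS]].
  by move: uv; rewrite e ltnn.
by move: h; rewrite vS /=; apply/negP/negPn/existsP; exists u; rewrite uv.
Qed.

Lemma block_nc H (S : pred T) :
  (forall u v, conn H u v = (u == v) || ((u \in S) && (v \in S))) -> noncrossing H.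
Proof.
move=> hc; apply/noncrossP => a b c d ab bc cd; rewrite !hc.
move=> /orP[/eqP e|/andP[aS _]]; first by move: ab bc; rewrite e; lia.
move=> /orP[/eqP e|/andP[bS _]]; first by move: bc cd; rewrite e; lia.
by rewrite aS bS orbT.
Qed.

Lemma block_bond H (S : pred T) :
  (forall u v, conn H u v = (u == v) || ((u \in S) && (v \in S))) ->
  H \subset Eset G ->
  (forall a b, (a < b)%N -> G a b -> a \in S -> b \in S -> (a, b) \in H) -> is_bond G H.
Proof.
move=> hc sub hp; rewrite /is_bond sub /=.
apply/forallP => a; apply/forallP => b; apply/implyP => /and3P[ab g].
rewrite hc => /orP[/eqP e|/andP[aS bS]]; first by move: ab; rewrite e ltnn.
exact: hp.
Qed.

Lemma conn0 u v : conn (set0 : edgeset n) u v = (u == v).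
Proof.
apply/idP/eqP => [c|->]; last exact: conn_refl.
by apply: (connect_f (f := id)) c => a b; rewrite /hrel !inE.
Qed.

Lemma nec : mm_EL_labeling G -> perfectly_labeled G.
Proof.
move=> EL i j k ij jk gik gjk.
case gij: (G i j) => //; exfalso.
have ik : (i < k)%N := ltn_trans ij jk.
have nij : i != j by rewrite -val_eqE /= neq_ltn ij.
have njk : j != k by rewrite -val_eqE /= neq_ltn jk.
have nik : i != k by rewrite -val_eqE /= neq_ltn ik.
set y1 : edgeset n := [set (i, k)].
set y2 : edgeset n := [set (j, k)].
set y : edgeset n := [set (i, k); (j, k)].
set S1 : pred T := [pred u | (u == i) || (u == k)].
set S2 : pred T := [pred u | (u == j) || (u == k)].
set S : pred T := [pred u | [|| u == i, u == j | u == k]].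
have c1 : forall u v, conn y1 u v = (u == v) || ((u \in S1) && (v \in S1)).
  apply: (@conn_block _ _ k); first by rewrite !inE eqxx orbT.
    by move=> e; rewrite !inE => /eqP -> /=; rewrite !eqxx orbT.
  move=> u; rewrite !inE => /orP[] /eqP ->; last exact: conn_refl.
  by apply: conn_edge; rewrite inE.
have c2 : forall u v, conn y2 u v = (u == v) || ((u \in S2) && (v \in S2)).
  apply: (@conn_block _ _ k); first by rewrite !inE eqxx orbT.
    by move=> e; rewrite !inE => /eqP -> /=; rewrite !eqxx orbT.
  move=> u; rewrite !inE => /orP[] /eqP ->; last exact: conn_refl.
  by apply: conn_edge; rewrite inE.
have c : forall u v, conn y u v = (u == v) || ((u \in S) && (v \in S)).
  apply: (@conn_block _ _ k); first by rewrite !inE eqxx !orbT.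
    by move=> e; rewrite !inE => /orP[] /eqP -> /=; rewrite !eqxx !orbT.
  move=> u; rewrite !inE => /or3P[] /eqP ->; last exact: conn_refl.
    by apply: conn_edge; rewrite !inE eqxx.
  by apply: conn_edge; rewrite !inE eqxx orbT.
have Ey1 : y1 \subset Eset G by apply/subsetP => e; rewrite !inE => /eqP -> /=; rewrite ik gik.
have Ey2 : y2 \subset Eset G by apply/subsetP => e; rewrite !inE => /eqP -> /=; rewrite jk gjk.
have Ey : y \subset Eset G.
  by apply/subsetP => e; rewrite !inE => /orP[] /eqP -> /=; rewrite ?ik ?gik ?jk ?gjk.
have n0 : ncbond G set0.
  rewrite /ncbond /is_bond sub0set /=; apply/andP; split.
    apply/forallP => a; apply/forallP => b; apply/implyP => /and3P[ab _].
    by rewrite conn0 => /eqP e; move: ab; rewrite e ltnn.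
  apply/noncrossP => a b c' d ab bc cd; rewrite conn0 => /eqP e.
  by move: ab bc; rewrite e; lia.
have n1 : ncbond G y1.
  rewrite /ncbond (block_nc c1) andbT; apply: (block_bond c1 Ey1).
  move=> a b ab _; rewrite !inE => /orP[] /eqP ea /orP[] /eqP eb; subst a b;
    rewrite ?eqxx //; by move: ab ij jk; clear; lia.
have n2 : ncbond G y2.
  rewrite /ncbond (block_nc c2) andbT; apply: (block_bond c2 Ey2).
  move=> a b ab _; rewrite !inE => /orP[] /eqP ea /orP[] /eqP eb; subst a b;
    rewrite ?eqxx //; by move: ab ij jk; clear; lia.
have ny : ncbond G y.
  rewrite /ncbond (block_nc c) andbT; apply: (block_bond c Ey).
  move=> a b ab gab; rewrite !inE => /or3P[] /eqP ea /or3P[] /eqP eb; subst a b;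
    rewrite ?eqxx ?orbT //; try by move: ab ij jk; clear; lia.
  by rewrite gij in gab.
have b0 : forall v, isbmin set0 v.
  move=> v; apply/isbminP => u uv; rewrite conn0; apply/eqP => e.
  by move: uv; rewrite e ltnn.
have by1 : forall v, isbmin y1 v = (v != k).
  move=> v; rewrite (block_isbmin c1) !inE; case: (eqVneq v k) => [->|vk] /=.
    rewrite orbT /=; apply/negbTE; rewrite negbK; apply/existsP; exists i.
    by rewrite ik !inE eqxx.
  rewrite orbF; apply/negP => /andP[/eqP vi /existsP[u /andP[uv /orP[] /eqP eu]]];
    subst; by move: uv ij jk; clear; lia.
have by2 : forall v, isbmin y2 v = (v != k).
  move=> v; rewrite (block_isbmin c2) !inE; case: (eqVneq v k) => [->|vk] /=.
    rewrite orbT /=; apply/negbTE; rewrite negbK; apply/existsP; exists j.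
    by rewrite jk !inE eqxx ?orbT.
  rewrite orbF; apply/negP => /andP[/eqP vi /existsP[u /andP[uv /orP[] /eqP eu]]];
    subst; by move: uv ij jk; clear; lia.
have byy : forall v, isbmin y v = (v != j) && (v != k).
  move=> v; rewrite (block_isbmin c) !inE.
  case: (eqVneq v j) => [->|vj] /=.
    rewrite orbT /=; apply/negbTE; rewrite negbK; apply/existsP; exists i.
    by rewrite ij !inE eqxx.
  case: (eqVneq v k) => [->|vk] /=.
    rewrite !orbT /=; apply/negbTE; rewrite negbK; apply/existsP; exists i.
    by rewrite ik !inE eqxx.
  rewrite !orbF; apply/negP => /andP[/eqP vi /existsP[u /andP[uv /or3P[] /eqP eu]]];
    subst; by move: uv ij jk; clear; lia.
have l01 : mmlabel set0 y1 = k by apply: mmlabel_eq => v; rewrite b0 by1 negbK.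
have l02 : mmlabel set0 y2 = k by apply: mmlabel_eq => v; rewrite b0 by2 negbK.
have l1 : mmlabel y1 y = j.
  apply: mmlabel_eq => v; rewrite by1 byy; case: (eqVneq v k) => [->|vk] /=.
    by rewrite eq_sym (negbTE njk).
  by rewrite andbT negbK.
have l2 : mmlabel y2 y = j.
  apply: mmlabel_eq => v; rewrite by2 byy; case: (eqVneq v k) => [->|vk] /=.
    by rewrite eq_sym (negbTE njk).
  by rewrite andbT negbK.
have jk_y1 : ((j, k) \in y1) = false.
  by rewrite inE xpair_eqE eqxx andbT eq_sym (negbTE nij).
have ik_y2 : ((i, k) \in y2) = false.
  by rewrite inE xpair_eqE eqxx andbT (negbTE nij).
have jk_y : (j, k) \in y by rewrite !inE eqxx orbT.
have ik_y : (i, k) \in y by rewrite !inE eqxx.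
have y1y : y1 != y by apply/eqP => e; move: jk_y; rewrite -e jk_y1.
have y2y : y2 != y by apply/eqP => e; move: ik_y; rewrite -e ik_y2.
have y1s : y1 \subset y by apply/subsetP => e; rewrite !inE => ->.
have pr01 : set0 \proper y1.
  rewrite properEneq sub0set andbT; apply/eqP => e.
  have h : (i, k) \in y1 by rewrite inE.
  by rewrite -e inE in h.
have [s [ms ss _ _]] := EL set0 y n0 ny (sub0set _).
case: s ms ss => [|z1 s'] ms ss.
  case/andP: ms => _ /eqP /= e.
  by move: ik_y; rewrite -e inE.
have [cz1 p1] : nc_cover G set0 z1 /\ path (nc_cover G) z1 s' by case/andP: ms => /andP.
have l1e : last z1 s' = y by case/andP: ms => _ /eqP.
have z1y : z1 \subset y by rewrite -l1e; exact: path_sub p1.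
have pr1 : set0 \proper z1 by case/and4P: cz1.
have hz1 : z1 = y1 \/ z1 = y2.
  case: (sub_pair z1y) => ez; [ | by left | by right | ].
    by move: pr1; rewrite ez properxx.
  exfalso; case/and4P: cz1 => _ _ _ /forallP /(_ y1).
  by rewrite n1 pr01 ez properEneq y1y y1s.
have z1ny : z1 != y by case: hz1 => ->.
clear ms.
case: s' ss p1 l1e => [|z2 s''] ss p1 l1e.
  by move: z1ny; rewrite -l1e eqxx.
have [cz2 p2] : nc_cover G z1 z2 /\ path (nc_cover G) z2 s'' by case/andP: p1.
have z2y : z2 \subset y by rewrite -l1e; exact: path_sub p2.
have pr2 : z1 \proper z2 by case/and4P: cz2.
have ez2 : z2 = y.
  case: (sub_pair z2y) => // ez.
  - by have := proper_card pr2; rewrite ez cards0.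
  - move: pr2; rewrite ez; case: hz1 => ->; first by rewrite properxx.
    rewrite properE => /andP[/subsetP h _].
    have h2 : (j, k) \in y2 by rewrite inE.
    by move: (h _ h2); rewrite -/y1 jk_y1.
  - move: pr2; rewrite ez; case: hz1 => ->; last by rewrite properxx.
    rewrite properE => /andP[/subsetP h _].
    have h2 : (i, k) \in y1 by rewrite inE.
    by move: (h _ h2); rewrite -/y2 ik_y2.
move: ss; rewrite /chain_labels /= ez2 => /andP[].
by case: hz1 => ->; rewrite ?l01 ?l1 ?l02 ?l2 ltnNge (ltnW jk).
Qed.

End Nec.

Theorem proposition5p10 (n : nat) (G : rel 'I_n.+1) :
  symmetric G -> irreflexive G -> graph_connected G -> nc_graded G ->
  (mm_Sn_EL_labeling G <-> perfectly_labeled G).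
Proof.
move=> Gsym Girr gc _; split.
  by case=> EL _ _; apply: nec.
move=> PL; split.
- move=> x y nx ny xy.
  have [s [h1 h2 h3 h4 _]] := EL_main Gsym Girr PL (ltnSn (#|y| - #|x|)) nx ny xy.
  by exists s; split.
- by move=> s ms; case: (Sn_labels Gsym Girr PL gc ms).
- by move=> s ms; case: (Sn_labels Gsym Girr PL gc ms).
Qed.
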